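(* Let $E_1,E_2$ be nonempty bounded subsets of $M_a$ and $f:E_1\to E_2$ a surjective $d_a$-isometry; let $p\in E_1$ and $q=f(p)$. Let $F:\mathrm{GS}(E_1,p)\to M_a$ be the map $F\big(p+\sum_i\alpha_i(x_i-p)\big)=q+\sum_i\alpha_i(f(x_i)-q)$ ($x_i\in E_1$, $\alpha_i\in\mathbb R$, $\sum_i\alpha_i(x_i-p)\in M_a$). Then $F(\mathrm{GS}(E_1,p))=\mathrm{GS}(E_2,q)$.
   Context: Let $a=\{a_i\}$ be a sequence of positive reals with $\sum_i a_i^2<\infty$, $M_a=\{x\in\mathbb{R}^{\mathbb N}:\sum_i a_i^2x_i^2<\infty\}$ with inner product $\langle x,y\rangle_a=\sum_i a_i^2x_iy_i$, norm $\|\cdot\|_a$ and metric $d_a(x,y)=\|x-y\|_a$; a $d_a$-isometry is a map preserving $d_a$. Sums are indexed by finite or countable subsets of $\mathbb N$; infinite sums are $\|\cdot\|_a$-limits of partial sums. For $p\in E\subset M_a$, $\mathrm{GS}(E,p)=\{p+\sum_i\alpha_i(x_i-p)\in M_a: x_i\in E,\ \alpha_i\in\mathbb R\}$. (The map $F$ is well defined and is a $d_a$-isometry extending $f$.) *)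

(* Defs.v *)
From Stdlib Require Import Reals.
From Coquelicot Require Import Coquelicot.
Open Scope R_scope.

Definition seqR := nat -> R.

Definition weight (a : seqR) : Prop :=
  (forall i, 0 < a i) /\ ex_series (fun i => (a i) ^ 2).

Definition in_Ma (a : seqR) (x : seqR) : Prop :=
  ex_series (fun i => (a i) ^ 2 * (x i) ^ 2).

Definition norm_a (a : seqR) (x : seqR) : R :=
  sqrt (Series (fun i => (a i) ^ 2 * (x i) ^ 2)).

Definition vadd (x y : seqR) : seqR := fun k => x k + y k.
Definition vsub (x y : seqR) : seqR := fun k => x k - y k.
Definition vscal (c : R) (x : seqR) : seqR := fun k => c * x k.

Definition d_a (a : seqR) (x y : seqR) : R := norm_a a (vsub x y).

Fixpoint psum (u : nat -> seqR) (n : nat) : seqR :=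
  match n with
  | O => fun _ => 0
  | S m => vadd (psum u m) (u m)
  end.

(* sum_i u_i = s, the sum being the ||.||_a-limit (in M_a) of the partial
   sums.  Finite sums are the case where u_i = 0 for large i. *)
Definition sum_to_a (a : seqR) (u : nat -> seqR) (s : seqR) : Prop :=
  in_Ma a s /\ is_lim_seq (fun n => norm_a a (vsub (psum u n) s)) 0.

Definition GS (a : seqR) (E : seqR -> Prop) (p : seqR) (y : seqR) : Prop :=
  in_Ma a y /\
  exists (x : nat -> seqR) (alpha : nat -> R) (s : seqR),
    (forall i, E (x i)) /\
    sum_to_a a (fun i => vscal (alpha i) (vsub (x i) p)) s /\
    y = vadd p s.

Definition subset_Ma (a : seqR) (E : seqR -> Prop) : Prop :=
  forall x, E x -> in_Ma a x.

Definition nonempty (E : seqR -> Prop) : Prop := exists x, E x.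

Definition bounded_a (a : seqR) (E : seqR -> Prop) : Prop :=
  exists r, forall x y, E x -> E y -> d_a a x y <= r.

(* Main.v *)
Require Import Defs.
From Stdlib Require Import Reals Lra Lia Psatz.
From Coquelicot Require Import Coquelicot.
From Stdlib Require Import ClassicalEpsilon FunctionalExtensionality.
Open Scope R_scope.

Lemma exs_plus (u v : nat -> R) : ex_series u -> ex_series v -> ex_series (fun n => u n + v n).
Proof. intros. exact (ex_series_plus u v H H0). Qed.
Lemma exs_scal (c : R) (u : nat -> R) : ex_series u -> ex_series (fun n => c * u n).
Proof. intros. exact (ex_series_scal_l c u H). Qed.

Lemma exs_le (u v : nat -> R) : (forall n, Rabs (u n) <= v n) -> ex_series v -> ex_series u.
Proof. intros. apply (ex_series_le u v); auto. Qed.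

Lemma exs_ext (u v : nat -> R) : (forall n, u n = v n) -> ex_series u -> ex_series v.
Proof. intros. exact (ex_series_ext u v H H0). Qed.

Definition ip (a x y : seqR) : R := Series (fun k => a k ^ 2 * x k * y k).
Definition NN (a x : seqR) : R := Series (fun k => a k ^ 2 * x k ^ 2).

Lemma in_Ma_ext a x y : in_Ma a x -> (forall k, x k = y k) -> in_Ma a y.
Proof. unfold in_Ma; intros H E. eapply exs_ext; [|exact H]. intro n; simpl; rewrite E; auto. Qed.

Lemma ex_ip a x y : in_Ma a x -> in_Ma a y -> ex_series (fun k => a k ^ 2 * x k * y k).
Proof.
  intros Hx Hy. apply exs_le with (fun k => a k ^ 2 * x k ^ 2 + a k ^ 2 * y k ^ 2).
  - intro n. assert (0 <= a n ^ 2) by nra.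
    unfold Rabs; destruct Rcase_abs; nra.
  - apply exs_plus; auto.
Qed.

Lemma in_Ma_add a x y : in_Ma a x -> in_Ma a y -> in_Ma a (vadd x y).
Proof.
  intros Hx Hy. unfold in_Ma, vadd.
  apply exs_ext with (fun k => a k ^ 2 * x k ^ 2 + (2 * (a k ^ 2 * x k * y k) + a k ^ 2 * y k ^ 2)).
  - intro; ring.
  - apply exs_plus; auto. apply exs_plus; auto. apply exs_scal. apply ex_ip; auto.
Qed.

Lemma in_Ma_scal a c x : in_Ma a x -> in_Ma a (vscal c x).
Proof.
  intros Hx. unfold in_Ma, vscal.
  apply exs_ext with (fun k => c ^ 2 * (a k ^ 2 * x k ^ 2)).
  - intro; ring.
  - apply exs_scal; auto.
Qed.

Lemma in_Ma_sub a x y : in_Ma a x -> in_Ma a y -> in_Ma a (vsub x y).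
Proof.
  intros. apply in_Ma_ext with (vadd x (vscal (-1) y)).
  - apply in_Ma_add; auto. apply in_Ma_scal; auto.
  - intro; unfold vadd, vscal, vsub; ring.
Qed.

Lemma in_Ma_zero a : in_Ma a (fun _ => 0).
Proof. unfold in_Ma. apply exs_ext with (fun k => 0 * (1/2) ^ k). intro; ring.
  apply exs_scal. apply ex_series_geom. rewrite Rabs_pos_eq; lra. Qed.

Lemma in_Ma_psum a u n : (forall i, in_Ma a (u i)) -> in_Ma a (psum u n).
Proof. intros H; induction n; simpl. apply in_Ma_zero. apply in_Ma_add; auto. Qed.

Lemma ip_add a x y z : in_Ma a x -> in_Ma a y -> in_Ma a z ->
  ip a (vadd x y) z = ip a x z + ip a y z.
Proof.
  intros. unfold ip, vadd. rewrite <- Series_plus by (apply ex_ip; auto).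
  apply Series_ext; intro; ring.
Qed.

Lemma ip_scal a c x z : ip a (vscal c x) z = c * ip a x z.
Proof. unfold ip, vscal. rewrite <- Series_scal_l. apply Series_ext; intro; ring. Qed.

Lemma ip_sym a x y : ip a x y = ip a y x.
Proof. unfold ip. apply Series_ext; intro; ring. Qed.

Lemma NN_ip a x : NN a x = ip a x x.
Proof. unfold NN, ip. apply Series_ext; intro; ring. Qed.

Lemma ip_zero a z : ip a (fun _ => 0) z = 0.
Proof. replace (fun _:nat => 0) with (vscal 0 z). rewrite ip_scal; ring.
  apply functional_extensionality; intro; unfold vscal; ring. Qed.

Lemma NN_sub a x y : in_Ma a x -> in_Ma a y ->
  NN a (vsub x y) = NN a x + NN a y - 2 * ip a x y.
Proof.
  intros. unfold NN, ip, vsub.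
  rewrite <- Series_scal_l, <- Series_plus, <- Series_minus; auto.
  apply Series_ext; intro; ring.
  apply exs_plus; auto. apply exs_scal. apply ex_ip; auto.
Qed.

Lemma Series_zero : Series (fun _ => 0) = 0.
Proof. rewrite <- (Series_ext (fun n => 0 * 0)) by (intro; ring). rewrite Series_scal_l; ring. Qed.

Lemma Series_nonneg (h : nat -> R) : (forall k, 0 <= h k) -> ex_series h -> 0 <= Series h.
Proof. intros. rewrite <- Series_zero. apply Series_le; auto. intro; split; auto; lra. Qed.

Lemma partial_le (h : nat -> R) K : (forall k, 0 <= h k) -> ex_series h -> sum_n h K <= Series h.
Proof.
  intros H E. apply is_lim_seq_incr_compare.
  - apply (Series_correct h E).
  - intro n. rewrite sum_Sn. unfold plus; simpl. specialize (H (S n)); lra.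
Qed.

Lemma sum_n_nonneg (h : nat -> R) K : (forall k, 0 <= h k) -> 0 <= sum_n h K.
Proof. intros H; induction K. rewrite sum_O; auto. rewrite sum_Sn; unfold plus; simpl. specialize (H (S K)); lra. Qed.

Lemma term_le (h : nat -> R) K : (forall k, 0 <= h k) -> ex_series h -> h K <= Series h.
Proof.
  intros H E. eapply Rle_trans; [|apply (partial_le h K H E)].
  destruct K. rewrite sum_O; lra. rewrite sum_Sn; unfold plus; simpl.
  pose proof (sum_n_nonneg h K H); lra.
Qed.

Lemma NN_nonneg a x : in_Ma a x -> 0 <= NN a x.
Proof. intros. apply Series_nonneg; auto. intro; nra. Qed.

Lemma NN_term a x k : in_Ma a x -> a k ^ 2 * x k ^ 2 <= NN a x.
Proof. intros. apply (term_le (fun k => a k ^ 2 * x k ^ 2)); auto. intro; nra. Qed.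

Lemma NN_sym a x y : NN a (vsub x y) = NN a (vsub y x).
Proof. unfold NN, vsub; apply Series_ext; intro; ring. Qed.

Lemma NN_tri2 a x y z : in_Ma a x -> in_Ma a y -> in_Ma a z ->
  NN a (vsub x y) <= 2 * NN a (vsub x z) + 2 * NN a (vsub z y).
Proof.
  intros. unfold NN. rewrite <- !Series_scal_l, <- Series_plus.
  - apply Series_le. intro n; unfold vsub.
    assert (0 <= a n ^ 2) by nra.
    assert ((x n - y n) ^ 2 <= 2 * (x n - z n) ^ 2 + 2 * (z n - y n) ^ 2) by (pose proof (pow2_ge_0 ((x n - z n) - (z n - y n))); nra).
    split. apply Rmult_le_pos; [exact H2| apply pow2_ge_0]. eapply Rle_trans; [exact (Rmult_le_compat_l _ _ _ H2 H3)| right; ring].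
    apply exs_plus; apply exs_scal; apply in_Ma_sub; auto.
  - apply exs_scal; apply in_Ma_sub; auto.
  - apply exs_scal; apply in_Ma_sub; auto.
Qed.

Section Gram.
Variable a : seqR.
Variables u v : nat -> seqR.
Hypothesis Hu : forall i, in_Ma a (u i).
Hypothesis Hv : forall i, in_Ma a (v i).
Hypothesis G : forall i j, ip a (u i) (u j) = ip a (v i) (v j).

Lemma gram_ip (c : nat -> R) n j :
  ip a (psum (fun i => vscal (c i) (u i)) n) (u j) = ip a (psum (fun i => vscal (c i) (v i)) n) (v j).
Proof.
  induction n; simpl. rewrite !ip_zero; auto.
  rewrite !ip_add, !ip_scal, IHn, G; auto.
  all: try apply in_Ma_scal; auto; apply in_Ma_psum; intro; apply in_Ma_scal; auto.
Qed.

Lemma gram_NN (c : nat -> R) n :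
  NN a (psum (fun i => vscal (c i) (u i)) n) = NN a (psum (fun i => vscal (c i) (v i)) n).
Proof.
  rewrite !NN_ip. induction n; simpl. rewrite !ip_zero; auto.
  assert (Pu : in_Ma a (psum (fun i => vscal (c i) (u i)) n)) by (apply in_Ma_psum; intro; apply in_Ma_scal; auto).
  assert (Pv : in_Ma a (psum (fun i => vscal (c i) (v i)) n)) by (apply in_Ma_psum; intro; apply in_Ma_scal; auto).
  assert (Su : in_Ma a (vscal (c n) (u n))) by (apply in_Ma_scal; auto).
  assert (Sv : in_Ma a (vscal (c n) (v n))) by (apply in_Ma_scal; auto).
  set (Pu' := psum (fun i => vscal (c i) (u i)) n) in *.
  set (Pv' := psum (fun i => vscal (c i) (v i)) n) in *.
  assert (Au : in_Ma a (vadd Pu' (vscal (c n) (u n)))) by (apply in_Ma_add; auto).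
  assert (Av : in_Ma a (vadd Pv' (vscal (c n) (v n)))) by (apply in_Ma_add; auto).
  rewrite (ip_add a Pu' _ _ Pu Su Au), (ip_add a Pv' _ _ Pv Sv Av).
  rewrite (ip_sym a Pu'), (ip_sym a Pv'), (ip_sym a (vscal _ (u n))), (ip_sym a (vscal _ (v n))).
  rewrite (ip_add a Pu' _ _ Pu Su Pu), (ip_add a Pv' _ _ Pv Sv Pv).
  rewrite (ip_add a Pu' _ _ Pu Su Su), (ip_add a Pv' _ _ Pv Sv Sv).
  rewrite !ip_scal. rewrite !(ip_sym a _ (vscal _ _)), !ip_scal.
  rewrite IHn, G, (ip_sym a (u n) Pu'), (ip_sym a (v n) Pv').
  unfold Pu', Pv'. rewrite gram_ip. ring.
Qed.
End Gram.

Lemma psum_tail (c : nat -> R) (u : nat -> seqR) m n k :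
  psum (fun i => vscal (if Nat.leb m i then c i else 0) (u i)) n k =
  psum (fun i => vscal (c i) (u i)) n k - psum (fun i => vscal (c i) (u i)) (Nat.min m n) k.
Proof.
  induction n.
  - rewrite Nat.min_0_r. simpl. ring.
  - simpl. unfold vadd, vscal in *. rewrite IHn.
    destruct (Nat.leb m n) eqn:E.
    + apply Nat.leb_le in E. replace (Nat.min m (S n)) with m by lia.
      replace (Nat.min m n) with m by lia. ring.
    + apply Nat.leb_gt in E. replace (Nat.min m (S n)) with (S n) by lia.
      replace (Nat.min m n) with n by lia. simpl. unfold vadd. ring.
Qed.

Lemma NN_diff a (c : nat -> R) (u : nat -> seqR) m n : (m <= n)%nat ->
  NN a (vsub (psum (fun i => vscal (c i) (u i)) n) (psum (fun i => vscal (c i) (u i)) m)) =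
  NN a (psum (fun i => vscal (if Nat.leb m i then c i else 0) (u i)) n).
Proof.
  intros H. unfold NN. apply Series_ext. intro k. rewrite psum_tail.
  replace (Nat.min m n) with m by lia. reflexivity.
Qed.

Lemma lim_sqrt_iff (g : nat -> R) : (forall n, 0 <= g n) ->
  (is_lim_seq (fun n => sqrt (g n)) 0 <->
   forall eps, 0 < eps -> exists N, forall n, (N <= n)%nat -> g n < eps).
Proof.
  intros Hg. split.
  - intros H eps He. apply is_lim_seq_spec in H.
    destruct (H (mkposreal (sqrt eps) (sqrt_lt_R0 _ He))) as [N HN].
    exists N. intros n Hn. specialize (HN n Hn). simpl in HN.
    rewrite Rminus_0_r, Rabs_pos_eq in HN by apply sqrt_pos.
    apply sqrt_lt_0_alt; auto.
  - intros H. apply is_lim_seq_spec. intro eps.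
    destruct (H (eps * eps)) as [N HN]. pose proof (cond_pos eps); nra.
    exists N. intros n Hn. specialize (HN n Hn).
    rewrite Rminus_0_r, Rabs_pos_eq by apply sqrt_pos.
    rewrite <- (sqrt_square eps) by (pose proof (cond_pos eps); lra).
    apply sqrt_lt_1_alt; split; auto.
Qed.

Lemma lim_sum_n (g : nat -> nat -> R) (l : nat -> R) K :
  (forall k, is_lim_seq (fun m => g m k) (l k)) ->
  is_lim_seq (fun m => sum_n (g m) K) (sum_n l K).
Proof.
  intros H. induction K.
  - rewrite sum_O. apply is_lim_seq_ext with (fun m => g m 0%nat); auto.
    intro; rewrite sum_O; auto.
  - rewrite sum_Sn. apply is_lim_seq_ext with (fun m => sum_n (g m) K + g m (S K)).
    intro; rewrite sum_Sn; auto.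
    apply (is_lim_seq_plus' _ _ _ _ IHK (H (S K))).
Qed.

Lemma coord_small (ak d eps : R) : 0 < ak -> 0 < eps -> ak ^ 2 * d ^ 2 < (ak * eps) ^ 2 -> Rabs d < eps.
Proof.
  intros Ha He H. destruct (Rlt_or_le (Rabs d) eps) as [L|L]; auto. exfalso.
  rewrite <- (pow2_abs d) in H.
  assert (eps ^ 2 <= Rabs d ^ 2) by (apply pow_incr; lra).
  assert (0 <= ak ^ 2) by (apply pow2_ge_0).
  pose proof (Rmult_le_compat_l _ _ _ H1 H0).
  assert ((ak * eps) ^ 2 = ak ^ 2 * eps ^ 2) by ring. lra.
Qed.

Lemma complete a (P : nat -> seqR) : (forall k, 0 < a k) -> (forall n, in_Ma a (P n)) ->
  (forall eps, 0 < eps -> exists N, forall n m, (N <= n)%nat -> (N <= m)%nat ->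
      NN a (vsub (P n) (P m)) < eps) ->
  exists s, in_Ma a s /\ forall eps, 0 < eps -> exists N, forall n, (N <= n)%nat ->
      NN a (vsub (P n) s) < eps.
Proof.
  intros Ha HP HC.
  assert (Hcs : forall k, ex_lim_seq_cauchy (fun n => P n k)).
  { intros k eps. destruct (HC ((a k * eps) ^ 2)) as [N HN].
    { pose proof (Ha k); pose proof (cond_pos eps). apply pow_lt. nra. }
    exists N. intros n m Hn Hm. apply coord_small with (a k); auto. apply cond_pos.
    eapply Rle_lt_trans; [|apply (HN n m Hn Hm)].
    apply (NN_term a (vsub (P n) (P m)) k). apply in_Ma_sub; auto. }
  set (s := fun k => real (Lim_seq (fun n => P n k))).
  assert (Hs : forall k, is_lim_seq (fun n => P n k) (s k)).
  { intro k. apply Lim_seq_correct'. apply ex_lim_seq_cauchy_corr. auto. }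
  assert (Key : forall eps, 0 < eps -> exists N, forall n, (N <= n)%nat ->
     ex_series (fun k => a k ^ 2 * (vsub (P n) s k) ^ 2) /\
     Series (fun k => a k ^ 2 * (vsub (P n) s k) ^ 2) <= eps).
  { intros eps He. destruct (HC eps He) as [N HN]. exists N. intros n Hn.
    set (h := fun k => a k ^ 2 * (vsub (P n) s k) ^ 2).
    assert (Hh : forall k, 0 <= h k) by (intro; unfold h; apply Rmult_le_pos; apply pow2_ge_0).
    assert (HK : forall K, sum_n h K <= eps).
    { intro K.
      assert (L : is_lim_seq (fun m => sum_n (fun k => a k ^ 2 * (P n k - P m k) ^ 2) K) (sum_n h K)).
      { apply (lim_sum_n (fun m k => a k ^ 2 * (P n k - P m k) ^ 2) h K).
        intro k. unfold h, vsub.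
        apply is_lim_seq_ext with (fun m => a k ^ 2 * ((P n k - P m k) * (P n k - P m k))).
        { intro; ring. }
        replace (a k ^ 2 * (P n k - s k) ^ 2) with (a k ^ 2 * ((P n k - s k) * (P n k - s k))) by ring.
        apply is_lim_seq_mult'. apply is_lim_seq_const.
        apply is_lim_seq_mult'; apply is_lim_seq_minus'; auto; apply is_lim_seq_const. }
      assert (R : Rbar_le (sum_n h K) eps).
      { apply (is_lim_seq_le_loc (fun m => sum_n (fun k => a k ^ 2 * (P n k - P m k) ^ 2) K) (fun _ => eps) _ _); [|exact L|apply is_lim_seq_const].
        exists N. intros m Hm. left. eapply Rle_lt_trans; [|apply (HN n m Hn Hm)].
        apply (partial_le (fun k => a k ^ 2 * (P n k - P m k) ^ 2)).
        intro; apply Rmult_le_pos; apply pow2_ge_0.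
        apply (in_Ma_sub a (P n) (P m)); auto. }
      exact R. }
    assert (E : ex_series h).
    { destruct (ex_finite_lim_seq_incr (sum_n h) eps) as [l Hl].
      - intro m. rewrite sum_Sn. unfold plus; simpl. specialize (Hh (S m)); lra.
      - exact HK.
      - exists l. exact Hl. }
    split. exact E.
    assert (R : Rbar_le (Series h) eps).
    { apply (is_lim_seq_le (sum_n h) (fun _ => eps)); auto.
      apply (Series_correct h E). apply is_lim_seq_const. }
    exact R. }
  exists s. split.
  - destruct (Key 1 Rlt_0_1) as [N HN]. destruct (HN N (le_n N)) as [E _].
    apply in_Ma_ext with (vsub (P N) (vsub (P N) s)).
    apply in_Ma_sub; auto. intro; unfold vsub; ring.
  - intros eps He. destruct (Key (eps / 2)) as [N HN]. lra.
    exists N. intros n Hn. destruct (HN n Hn) as [_ H]. unfold NN. lra.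
Qed.

Lemma sum_to_eps a w t : (forall n, in_Ma a (w n)) -> sum_to_a a w t ->
  forall eps, 0 < eps -> exists N, forall n, (N <= n)%nat -> NN a (vsub (psum w n) t) < eps.
Proof.
  intros Hw [Ht L]. apply (lim_sqrt_iff (fun n => NN a (vsub (psum w n) t))).
  intro; apply NN_nonneg, in_Ma_sub; auto; apply in_Ma_psum; auto.
  exact L.
Qed.

Lemma unique_lim a w t t' : (forall k, 0 < a k) -> (forall n, in_Ma a (w n)) ->
  sum_to_a a w t -> sum_to_a a w t' -> t = t'.
Proof.
  intros Ha Hw H1 H2.
  assert (It : in_Ma a t) by apply H1. assert (It' : in_Ma a t') by apply H2.
  assert (Z : NN a (vsub t t') <= 0).
  { destruct (Rle_or_lt (NN a (vsub t t')) 0) as [L|L]; auto. exfalso.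
    set (e := NN a (vsub t t') / 8).
    destruct (sum_to_eps a w t Hw H1 e) as [N1 HN1]. unfold e; lra.
    destruct (sum_to_eps a w t' Hw H2 e) as [N2 HN2]. unfold e; lra.
    set (n := (N1 + N2)%nat).
    specialize (HN1 n ltac:(unfold n; lia)). specialize (HN2 n ltac:(unfold n; lia)).
    pose proof (NN_tri2 a t t' (psum w n) It It' (in_Ma_psum a w n Hw)).
    rewrite (NN_sym a t (psum w n)) in H. unfold e in *. lra. }
  apply functional_extensionality. intro k.
  pose proof (NN_term a (vsub t t') k (in_Ma_sub a t t' It It')).
  change (vsub t t' k) with (t k - t' k) in H.
  assert (0 < a k ^ 2) by (apply pow_lt; auto).
  assert (0 <= (t k - t' k) ^ 2) by apply pow2_ge_0.
  assert (E : (t k - t' k) ^ 2 = 0).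
  { destruct (Rle_lt_or_eq_dec _ _ H3) as [H4|H4]; [|auto]. pose proof (Rmult_lt_0_compat _ _ H0 H4). lra. }
  apply Rminus_diag_uniq. replace ((t k - t' k) ^ 2) with ((t k - t' k) * (t k - t' k)) in E by ring. destruct (Rmult_integral _ _ E); auto.
Qed.

Lemma iso_NN a x y x' y' : in_Ma a x -> in_Ma a y -> in_Ma a x' -> in_Ma a y' ->
  d_a a x' y' = d_a a x y -> NN a (vsub x' y') = NN a (vsub x y).
Proof.
  intros. apply sqrt_inj; try (apply NN_nonneg; apply in_Ma_sub; auto). exact H3.
Qed.

Lemma ip_polar a x y p : in_Ma a x -> in_Ma a y -> in_Ma a p ->
  ip a (vsub x p) (vsub y p) = (NN a (vsub x p) + NN a (vsub y p) - NN a (vsub x y)) / 2.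
Proof.
  intros. replace (NN a (vsub x y)) with (NN a (vsub (vsub x p) (vsub y p))).
  rewrite (NN_sub a (vsub x p) (vsub y p)) by (apply in_Ma_sub; auto). rewrite !NN_ip. field.
  unfold NN, vsub; apply Series_ext; intro; ring.
Qed.

Theorem theorem3p16
  (a : seqR) (E1 E2 : seqR -> Prop) (f : seqR -> seqR) (p : seqR)
  (F : seqR -> seqR) :
  weight a ->
  subset_Ma a E1 -> subset_Ma a E2 ->
  nonempty E1 -> nonempty E2 ->
  bounded_a a E1 -> bounded_a a E2 ->
  (* f : E1 -> E2 is a surjective d_a-isometry *)
  (forall x, E1 x -> E2 (f x)) ->
  (forall y, E2 y -> exists x, E1 x /\ f x = y) ->
  (forall x y, E1 x -> E1 y -> d_a a (f x) (f y) = d_a a x y) ->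
  E1 p ->
  (* F is the map  p + sum_i alpha_i (x_i - p)  |->  q + sum_i alpha_i (f x_i - q),
     with q = f p *)
  (forall (x : nat -> seqR) (alpha : nat -> R) (s : seqR),
      (forall i, E1 (x i)) ->
      sum_to_a a (fun i => vscal (alpha i) (vsub (x i) p)) s ->
      exists t, sum_to_a a (fun i => vscal (alpha i) (vsub (f (x i)) (f p))) t
                /\ F (vadd p s) = vadd (f p) t) ->
  forall y, (exists z, GS a E1 p z /\ F z = y) <-> GS a E2 (f p) y.
Proof.
  intros [Ha _] S1 S2 _ _ _ _ Hf Hsurj Hiso Hp HF y. split.
  - intros [z [[Hz [x [alpha [s [Hx [Hs Hzs]]]]]] HFz]]. subst z.
    destruct (HF x alpha s Hx Hs) as [t [Ht HFt]].
    rewrite HFt in HFz. subst y. split.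
    + apply in_Ma_add. apply S2, Hf, Hp. apply Ht.
    + exists (fun i => f (x i)), alpha, t. repeat split; auto.
      apply Ht. apply Ht.
  - intros [Hy [yy [alpha [t [Hyy [Ht Hyt]]]]]].
    set (x := fun i => proj1_sig (constructive_indefinite_description _ (Hsurj (yy i) (Hyy i)))).
    assert (Hx : forall i, E1 (x i) /\ f (x i) = yy i).
    { intro i. unfold x. destruct (constructive_indefinite_description _ _); auto. }
    assert (Ht' : sum_to_a a (fun i => vscal (alpha i) (vsub (f (x i)) (f p))) t).
    { replace (fun i => vscal (alpha i) (vsub (f (x i)) (f p))) with (fun i => vscal (alpha i) (vsub (yy i) (f p))); auto.
      apply functional_extensionality; intro i. rewrite (proj2 (Hx i)); auto. }
    clear Ht; rename Ht' into Ht.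
    set (u := fun i => vsub (x i) p). set (v := fun i => vsub (f (x i)) (f p)).
    assert (Mp : in_Ma a p) by auto.
    assert (Mfp : in_Ma a (f p)) by auto.
    assert (Mx : forall i, in_Ma a (x i)) by (intro; apply S1, Hx).
    assert (Mfx : forall i, in_Ma a (f (x i))) by (intro; apply S2, Hf, Hx).
    assert (Hu : forall i, in_Ma a (u i)) by (intro; apply in_Ma_sub; auto).
    assert (Hv : forall i, in_Ma a (v i)) by (intro; apply in_Ma_sub; auto).
    assert (G : forall i j, ip a (u i) (u j) = ip a (v i) (v j)).
    { intros i j. unfold u, v. rewrite !ip_polar by auto.
      rewrite (iso_NN a (x i) p (f (x i)) (f p)), (iso_NN a (x j) p (f (x j)) (f p)),
        (iso_NN a (x i) (x j) (f (x i)) (f (x j))); auto; apply Hiso; apply Hx || auto. }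
    set (P := fun n => psum (fun i => vscal (alpha i) (u i)) n).
    set (Q := fun n => psum (fun i => vscal (alpha i) (v i)) n).
    assert (MP : forall n, in_Ma a (P n)) by (intro; apply in_Ma_psum; intro; apply in_Ma_scal; auto).
    assert (MQ : forall n, in_Ma a (Q n)) by (intro; apply in_Ma_psum; intro; apply in_Ma_scal; auto).
    assert (PQ : forall n m, NN a (vsub (P n) (P m)) = NN a (vsub (Q n) (Q m))).
    { intros n m. destruct (Nat.le_ge_cases m n) as [L|L].
      - unfold P, Q. rewrite !NN_diff by auto. apply gram_NN; auto.
      - rewrite (NN_sym a (P n)), (NN_sym a (Q n)).
        unfold P, Q. rewrite !NN_diff by auto. apply gram_NN; auto. }
    assert (Wv : forall i, in_Ma a (vscal (alpha i) (v i))) by (intro; apply in_Ma_scal; auto).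
    assert (Wu : forall i, in_Ma a (vscal (alpha i) (u i))) by (intro; apply in_Ma_scal; auto).
    assert (Mt : in_Ma a t) by apply Ht.
    assert (HC : forall eps, 0 < eps -> exists N, forall n m, (N <= n)%nat -> (N <= m)%nat ->
      NN a (vsub (P n) (P m)) < eps).
    { intros eps He. destruct (sum_to_eps a _ t Wv Ht (eps / 4)) as [N HN]. lra.
      exists N. intros n m Hn Hm. rewrite PQ.
      pose proof (NN_tri2 a (Q n) (Q m) t (MQ n) (MQ m) Mt).
      rewrite (NN_sym a t (Q m)) in H.
      pose proof (HN n Hn). pose proof (HN m Hm). unfold Q in *. lra. }
    destruct (complete a P Ha MP HC) as [s [Ms Hs]].
    assert (Hsum : sum_to_a a (fun i => vscal (alpha i) (u i)) s).
    { split; auto. exact (proj2 (lim_sqrt_iff (fun n => NN a (vsub (P n) s))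
         (fun n => NN_nonneg a _ (in_Ma_sub a _ _ (MP n) Ms))) Hs). }
    destruct (HF x alpha s (fun i => proj1 (Hx i)) Hsum) as [t' [Ht'' HFt]].
    assert (Et : t = t') by (apply (unique_lim a _ t t' Ha Wv); auto).
    exists (vadd p s). split.
    + split. apply in_Ma_add; auto. exists x, alpha, s.
      split; [intro; apply Hx | split; [exact Hsum | reflexivity]].
    + rewrite HFt, Hyt, Et. reflexivity.
Qed.
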